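(* Let $G$ be a simple connected graph and let $v$ be an eigenvector of $\mathcal M$ with $\mathcal Mv=\mu v$, $\mu>0$, $\|v\|_2=1$. Let $S=\{i: v_i\ge0\}$. If $$\mu>\frac{(\mathrm{vol}\, S)^2+(\mathrm{vol}\, \bar S)^2}{\mathrm{vol}\, V}\,\max_{i\in V}\frac{v_i^2}{d_i},$$ then $Q(S)>0$.
   Context: $G=(V,E)$ is a finite, undirected, unweighted, simple connected graph with adjacency matrix $A$, degrees $d_i$, $D=\mathrm{Diag}(d_i)$, $\delta=(\sqrt{d_i})_i$, $\mathrm{vol}\, S=\sum_{i\in S}d_i$, $\bar S=V\setminus S$, $\mathbb 1_S$ the characteristic vector of $S$. $\mathcal M=D^{-1/2}AD^{-1/2}-\frac{1}{\mathrm{vol}\, V}\delta\delta^{\mathsf T}$. The modularity of $S$ is $Q(S)=\mathbb 1_S^{\mathsf T}A\mathbb 1_S-(\mathrm{vol}\, S)^2/\mathrm{vol}\, V$. *)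

(* Defs.v *)
From HB Require Import structures.
From mathcomp Require Import all_boot all_order all_algebra.
Set Implicit Arguments. Unset Strict Implicit. Unset Printing Implicit Defensive.
Import Order.TTheory GRing.Theory Num.Theory.
Local Open Scope ring_scope.

Definition simple_graph (n : nat) (e : rel 'I_n) : Prop :=
  symmetric e /\ irreflexive e.

Definition connected_graph (n : nat) (e : rel 'I_n) : Prop :=
  forall i j : 'I_n, connect e i j.

Definition adjmx (R : nzRingType) (n : nat) (e : rel 'I_n) : 'M[R]_n :=
  \matrix_(i, j) (e i j)%:R.

Definition deg (n : nat) (e : rel 'I_n) (i : 'I_n) : nat := #|[set j | e i j]|.

Definition vol (n : nat) (e : rel 'I_n) (S : {set 'I_n}) : nat :=
  (\sum_(i in S) deg e i)%N.

Definition invsqrtD (R : rcfType) (n : nat) (e : rel 'I_n) : 'M[R]_n :=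
  diag_mx (\row_i (Num.sqrt ((deg e i)%:R : R))^-1).

Definition sqrtdeg (R : rcfType) (n : nat) (e : rel 'I_n) : 'cV[R]_n :=
  \col_i Num.sqrt ((deg e i)%:R : R).

Definition modmx (R : rcfType) (n : nat) (e : rel 'I_n) : 'M[R]_n :=
  invsqrtD R e *m adjmx R e *m invsqrtD R e
  - ((vol e setT)%:R : R)^-1 *: (sqrtdeg R e *m (sqrtdeg R e)^T).

Definition charvec (R : nzRingType) (n : nat) (S : {set 'I_n}) : 'cV[R]_n :=
  \col_i (i \in S)%:R.

Definition modularity (R : rcfType) (n : nat) (e : rel 'I_n) (S : {set 'I_n}) : R :=
  ((charvec R S)^T *m adjmx R e *m charvec R S) 0 0
  - ((vol e S)%:R ^+ 2) / (vol e setT)%:R.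

(* Main.v *)
Require Import Defs.
From HB Require Import structures.
From mathcomp Require Import all_boot all_order all_algebra.
From mathcomp Require Import ring lra.
Import Order.TTheory GRing.Theory Num.Theory.
Local Open Scope ring_scope.

Section H.
Variables (R : rcfType) (n : nat) (e : rel 'I_n).

Lemma deg_sum i : (deg e i)%:R = \sum_j (e i j)%:R :> R.
Proof.
rewrite /deg -sum1_card natr_sum big_mkcond /=; apply: eq_bigr => j _.
by rewrite inE; case: (e i j).
Qed.

Lemma vol_sum (S : {set 'I_n}) :
  (vol e S)%:R = \sum_i \sum_j (e i j)%:R * (i \in S)%:R :> R.
Proof.
rewrite /vol natr_sum big_mkcond /=; apply: eq_bigr => i _.
rewrite deg_sum -big_distrl /=.
by case: (i \in S); rewrite ?mulr1 ?mulr0.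
Qed.

Lemma Q_sum (S : {set 'I_n}) :
  ((charvec R S)^T *m adjmx R e *m charvec R S) 0 0 =
  \sum_i \sum_j (e i j)%:R * ((i \in S)%:R * (j \in S)%:R).
Proof.
rewrite mxE exchange_big /=; apply: eq_bigr => i _.
rewrite !mxE big_distrl /=; apply: eq_bigr => j _.
rewrite !mxE; ring.
Qed.

Lemma modmx_entry (v : 'cV[R]_n) i :
  (modmx R e *m v) i 0 =
  \sum_j (Num.sqrt ((deg e i)%:R : R))^-1 * (e i j)%:R
         * (Num.sqrt ((deg e j)%:R : R))^-1 * v j 0
  - \sum_j ((vol e setT)%:R : R)^-1 * (Num.sqrt ((deg e i)%:R : R)
         * Num.sqrt ((deg e j)%:R : R)) * v j 0.
Proof.
rewrite /modmx mulmxBl.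
rewrite [LHS]mxE [X in _ + X]mxE.
congr (_ - _).
  rewrite /invsqrtD mul_mx_diag mul_diag_mx mxE; apply: eq_bigr => j _.
  by rewrite !mxE.
rewrite mxE; apply: eq_bigr => j _.
rewrite !mxE big_ord1 !mxE; done.
Qed.
End H.

Lemma natr_bool (R : rcfType) (x : bool) : (x%:R : R) = if x then 1 else 0.
Proof. by case: x. Qed.

Theorem theorem5p1 (R : rcfType) (n : nat) (e : rel 'I_n)
  (v : 'cV[R]_n) (mu : R) :
  simple_graph e -> connected_graph e ->
  modmx R e *m v = mu *: v -> 0 < mu ->
  \sum_(i < n) v i 0 ^+ 2 = 1 ->
  let S := [set i | 0 <= v i 0] in
  mu > ((vol e S)%:R ^+ 2 + (vol e (~: S))%:R ^+ 2) / (vol e setT)%:R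
         * \big[Num.max/0]_(i < n) (v i 0 ^+ 2 / (deg e i)%:R) ->
  0 < modularity R e S.
Proof.
move=> [esym eirr] _ Hev Hmu Hnorm S Hgt.
set M := \big[Num.max/0]_(i < n) (v i 0 ^+ 2 / (deg e i)%:R) in Hgt.
pose s i := Num.sqrt ((deg e i)%:R : R).
pose u i := (s i)^-1 * v i 0.
pose W := ((vol e setT)%:R : R)^-1.
have HW : 0 <= W by rewrite invr_ge0 ler0n.
have Hent i : (modmx R e *m v) i 0 = mu * v i 0 by rewrite Hev mxE.
have step1 : mu = \sum_i \sum_j (e i j)%:R * (u i * u j)
                  - W * (\sum_i s i * v i 0) ^+ 2.
  transitivity (\sum_i v i 0 * (modmx R e *m v) i 0).
    rewrite -[LHS]mulr1 -Hnorm big_distrr /=; apply: eq_bigr => i _.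
    rewrite Hent; ring.
  under eq_bigr => i _ do rewrite modmx_entry mulrBr.
  rewrite sumrB; congr (_ - _).
    apply: eq_bigr => i _.
    rewrite big_distrr /=; apply: eq_bigr => j _; rewrite /u /s; ring.
  rewrite expr2 big_distrl mulr_sumr /=; apply: eq_bigr => i _.
  rewrite big_distrr big_distrr mulr_sumr /=; apply: eq_bigr => j _.
  rewrite /W /s; ring.
have Hu2 i : u i ^+ 2 <= M.
  rewrite /u exprMn exprVn /s sqr_sqrtr ?ler0n // mulrC.
  exact: (le_bigmax 0 (fun i => v i 0 ^+ 2 / (deg e i)%:R) i).
have HuS i : i \in S -> 0 <= u i.
  rewrite inE => h; rewrite /u mulr_ge0 // invr_ge0 sqrtr_ge0 //.
have HuN i : i \notin S -> u i <= 0.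
  rewrite inE -ltNge => h; rewrite /u mulr_ge0_le0 ?invr_ge0 ?sqrtr_ge0 //.
  exact: ltW.
pose bb i := ((i \in S)%:R : R).
pose x := \sum_i \sum_j (e i j)%:R * (bb i * bb j).
pose y := \sum_i \sum_j (e i j)%:R * ((1 - bb i) * (1 - bb j)).
pose c1 := \sum_i \sum_j (e i j)%:R * (bb i * (1 - bb j)).
pose c2 := \sum_i \sum_j (e i j)%:R * ((1 - bb i) * bb j).
have step2 : \sum_i \sum_j (e i j)%:R * (u i * u j) <= M * (x + y).
  rewrite /x /y -big_split mulr_sumr /=; apply: ler_sum => i _.
  rewrite -big_split mulr_sumr /=; apply: ler_sum => j _.
  have := Hu2 i; have := Hu2 j.
  rewrite /bb !natr_bool.
  case: (e i j) => /=; last by rewrite !mul0r addr0 mulr0.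
  rewrite !mul1r.
  case Hi: (i \in S); case Hj: (j \in S) => Huj Hui.
  - nra.
  - have := HuS i Hi; have := HuN j (negbT Hj); nra.
  - have := HuS j Hj; have := HuN i (negbT Hi); nra.
  - nra.
have nn (f : 'I_n -> 'I_n -> R) : (forall i j, 0 <= f i j) -> 0 <= \sum_i \sum_j (e i j)%:R * f i j.
  move=> hf; apply: sumr_ge0 => k _; apply: sumr_ge0 => l _.
  by rewrite mulr_ge0 ?ler0n.
have b01 i : 0 <= bb i <= 1 by rewrite /bb natr_bool; case: (i \in S) => /=; rewrite ?lexx ?ler01.
have x0 : 0 <= x by apply: nn => i j; have := b01 i; have := b01 j; nra.
have y0 : 0 <= y by apply: nn => i j; have := b01 i; have := b01 j; nra.
have c0 : 0 <= c1 by apply: nn => i j; have := b01 i; have := b01 j; nra.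
have Ha : (vol e S)%:R = x + c1 :> R.
  rewrite vol_sum /x /c1 -big_split; apply: eq_bigr => i _.
  rewrite -big_split; apply: eq_bigr => j _; rewrite /= /bb; ring.
have Hb : (vol e (~: S))%:R = y + c2 :> R.
  rewrite vol_sum /y /c2 -big_split; apply: eq_bigr => i _.
  rewrite -big_split; apply: eq_bigr => j _ /=; rewrite /bb in_setC !natr_bool.
  case: (i \in S) => /=; ring.
have HV : (vol e setT)%:R = x + y + c1 + c2 :> R.
  rewrite vol_sum /x /y /c1 /c2 -!big_split; apply: eq_bigr => i _.
  rewrite -!big_split; apply: eq_bigr => j _ /=; rewrite in_setT (_ : (true%:R : R) = 1) // /bb; ring.
have Hc : c1 = c2.
  rewrite /c1 /c2 exchange_big; apply: eq_bigr => i _; apply: eq_bigr => j _.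
  rewrite esym; ring.
have HQ : modularity R e S = x - (vol e S)%:R ^+ 2 / (vol e setT)%:R.
  by rewrite /modularity Q_sum.
rewrite -/W in Hgt HQ.
rewrite Hb -Hc in Hgt.
rewrite HQ Ha.
rewrite Ha in Hgt.
have le1 : mu <= M * (x + y).
  apply: le_trans step2; rewrite {1}step1 lerBlDr lerDl.
  by rewrite mulr_ge0 // sqr_ge0.
have HM : 0 < M.
  rewrite ltNge; apply/negP => hM.
  have : M * (x + y) <= 0 by rewrite mulr_le0_ge0 // addr_ge0.
  lra.
have [V0|Vn0] := eqVneq (x + y + c1 + c1) 0.
  have : x + y = 0 by lra.
  move=> h; move: le1; rewrite h mulr0; lra.
have key : x + y - ((x + c1) ^+ 2 + (y + c1) ^+ 2) * W = 2 * (x - (x + c1) ^+ 2 * W).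
  rewrite /W HV -Hc; field; exact: Vn0.
have : 0 < M * (x + y - ((x + c1) ^+ 2 + (y + c1) ^+ 2) * W) by nra.
rewrite key; rewrite pmulr_rgt0 // pmulr_rgt0 //.
Qed.
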